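(* Let $M\subset\mathbb{R}^{2d}$ be a smooth closed hypersurface bounding a quadratically convex domain containing the origin in its interior. For every point $x$ in the exterior of $M$ there exists a unique point $n_-(x)\in M$ with $R(n_-(x))\sim -x$, and a unique point $n_+(x)\in M$ with $R(n_+(x))\sim x$. Explicitly, in terms of the outward unit normal Gauss map $G:M\to S^{2d-1}$, $$n_+(x)=G^{-1}\Big(-\frac{Jx}{|x|}\Big),\qquad n_-(x)=G^{-1}\Big(\frac{Jx}{|x|}\Big).$$
   Context: $\mathbb{R}^{2d}$ carries its standard inner product, norm $|\cdot|$, complex structure $J$ (orthogonal, $J^2=-I$) and symplectic form $\omega(u,v)=\langle Ju,v\rangle$. For $q\in M$ the Reeb vector $R(q)$ is the unique vector with $\omega(v,R(q))=0$ for all $v\in T_qM$ and $\omega(q,R(q))=1$. The notation $a\sim b$ means $a=\lambda b$ for some $\lambda>0$. The Gauss map $G$ sends $q\in M$ to the outward unit normal of $M$ at $q$; it is a diffeomorphism under the convexity assumption. *)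

(* Defs.v *)
From HB Require Import structures.
From mathcomp Require Import all_boot all_order all_algebra.
From mathcomp Require Import all_classical all_reals all_analysis.
Set Implicit Arguments. Unset Strict Implicit. Unset Printing Implicit Defensive.
Import Order.TTheory GRing.Theory Num.Theory.
Import numFieldNormedType.Exports.
Local Open Scope ring_scope.
Local Open Scope classical_set_scope.

(* R^{2d} is modelled as row vectors 'rV[R]_(d + d); a vector is (x, y)
   with x = lsubmx u, y = rsubmx u (each in R^d). *)
Notation Vec R d := 'rV[R]_(d + d).

Section Defs.
Variables (R : realType) (d : nat).

Definition dot (u v : Vec R d) : R := \sum_(i < d + d) u 0 i * v 0 i.
Definition enorm (u : Vec R d) : R := Num.sqrt (dot u u).

(* standard complex structure: J (x, y) = (-y, x), i.e. multiplication by i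
   on C^d with z = x + i y. *)
Definition Jst (u : Vec R d) : Vec R d := row_mx (- rsubmx u) (lsubmx u).

Definition omega (u v : Vec R d) : R := dot (Jst u) v.

Definition sim (a b : Vec R d) : Prop := exists2 l : R, 0 < l & a = l *: b.

Fixpoint dirder (f : Vec R d -> R) (vs : seq (Vec R d)) : Vec R d -> R :=
  match vs with
  | [::] => f
  | v :: vs' => fun x => derive (dirder f vs') x v
  end.

Definition smooth (f : Vec R d -> R) : Prop :=
  forall vs : seq (Vec R d),
    continuous (dirder f vs) /\ (forall x v, derivable (dirder f vs) x v).

(* Setting: M = g^{-1}(0) is a regular level set of a smooth g : R^{2d} -> R,
   the domain bounded by M is D = {g < 0}, its exterior is {g > 0}.
   Tangent space T_q M = ker dg(q). *)
Definition tangent (g : Vec R d -> R) (q v : Vec R d) : Prop :=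
  derive g q v = 0.

Definition is_reeb (g : Vec R d -> R) (q r : Vec R d) : Prop :=
  (forall v, tangent g q v -> omega v r = 0) /\ omega q r = 1.

Definition is_outward_normal (g : Vec R d -> R) (q n : Vec R d) : Prop :=
  enorm n = 1 /\ (forall v, tangent g q v -> dot n v = 0) /\ 0 < derive g q n.

Definition smooth_closed_hypersurface_defining (g : Vec R d -> R) : Prop :=
  [/\ smooth g,
      (forall q, g q = 0 -> exists v, derive g q v != 0) &
      (* compactness: the closed domain {g <= 0} is bounded *)
      (exists B : R, forall x, g x <= 0 -> enorm x <= B)].

Definition quadratically_convex_domain (g : Vec R d -> R) : Prop :=
  (forall x y (t : R), g x < 0 -> g y < 0 -> 0 <= t <= 1 ->
      g ((1 - t) *: x + t *: y) < 0) /\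
  (* second fundamental form positive definite on every tangent space *)
  (forall q v, g q = 0 -> v != 0 -> tangent g q v -> 0 < dirder g [:: v; v] q).

End Defs.

(* Main.v *)
Require Import Defs.
From HB Require Import structures.
From mathcomp Require Import all_boot all_order all_algebra.
From mathcomp Require Import all_classical all_reals all_analysis.
From mathcomp Require Import ring lra.
Import Order.TTheory GRing.Theory Num.Theory.
Import numFieldNormedType.Exports.
Local Open Scope ring_scope.
Local Open Scope classical_set_scope.

Set Implicit Arguments. Unset Strict Implicit. Unset Printing Implicit Defensive.

Lemma dot_split (R : realType) (d : nat) (u v : Vec R d) :
  dot u v = \sum_(j < d) lsubmx u 0 j * lsubmx v 0 j + \sum_(j < d) rsubmx u 0 j * rsubmx v 0 j.
Proof. by rewrite /dot big_split_ord /=; congr (_ + _); apply: eq_bigr => j _; rewrite !mxE. Qed.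

Lemma dotC (R : realType) (d : nat) (u v : Vec R d) : dot u v = dot v u.
Proof. by rewrite /dot; apply: eq_bigr => i _; rewrite mulrC. Qed.

Lemma dotDl (R : realType) (d : nat) (u w v : Vec R d) : dot (u + w) v = dot u v + dot w v.
Proof. by rewrite /dot -big_split; apply: eq_bigr => i _; rewrite !mxE mulrDl. Qed.

Lemma dotZl (R : realType) (d : nat) (k : R) (u v : Vec R d) : dot (k *: u) v = k * dot u v.
Proof. by rewrite /dot mulr_sumr; apply: eq_bigr => i _; rewrite !mxE mulrA. Qed.

Lemma dotNl (R : realType) (d : nat) (u v : Vec R d) : dot (- u) v = - dot u v.
Proof. by rewrite -scaleN1r dotZl mulN1r. Qed.

Lemma dotBl (R : realType) (d : nat) (u w v : Vec R d) : dot (u - w) v = dot u v - dot w v.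
Proof. by rewrite dotDl dotNl. Qed.

Lemma dotDr (R : realType) (d : nat) (u w v : Vec R d) : dot v (u + w) = dot v u + dot v w.
Proof. by rewrite dotC dotDl !(dotC v). Qed.

Lemma dotZr (R : realType) (d : nat) (k : R) (u v : Vec R d) : dot v (k *: u) = k * dot v u.
Proof. by rewrite dotC dotZl dotC. Qed.

Lemma dotNr (R : realType) (d : nat) (u v : Vec R d) : dot v (- u) = - dot v u.
Proof. by rewrite dotC dotNl dotC. Qed.

Lemma dotBr (R : realType) (d : nat) (u w v : Vec R d) : dot v (u - w) = dot v u - dot v w.
Proof. by rewrite dotDr dotNr. Qed.

Lemma dot0l (R : realType) (d : nat) (v : Vec R d) : dot 0 v = 0.
Proof. by rewrite -(scale0r 0) dotZl mul0r. Qed.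

Lemma dot0r (R : realType) (d : nat) (v : Vec R d) : dot v 0 = 0.
Proof. by rewrite dotC dot0l. Qed.

Lemma dot_ge0 (R : realType) (d : nat) (v : Vec R d) : 0 <= dot v v.
Proof. by rewrite /dot sumr_ge0 // => i _; rewrite -expr2 sqr_ge0. Qed.

Lemma dot_eq0 (R : realType) (d : nat) (v : Vec R d) : dot v v = 0 -> v = 0.
Proof.
move=> /eqP; rewrite /dot psumr_eq0; last by move=> i _; rewrite -expr2 sqr_ge0.
move=> /allP H; apply/rowP => i; rewrite mxE.
have := H i (mem_index_enum i); rewrite implyTb -expr2 sqrf_eq0 => /eqP //.
Qed.

Lemma dot_gt0 (R : realType) (d : nat) (v : Vec R d) : v != 0 -> 0 < dot v v.
Proof.
move=> v0; rewrite lt_def dot_ge0 andbT; apply/eqP => /dot_eq0 /eqP.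
by rewrite (negbTE v0).
Qed.

Lemma dotJl (R : realType) (d : nat) (u v : Vec R d) : dot (Jst u) v = - dot u (Jst v).
Proof.
rewrite !dot_split /Jst !row_mxKl !row_mxKr opprD -!sumrN addrC.
by congr (_ + _); apply: eq_bigr => j _; rewrite !mxE ?mulrN ?mulNr ?opprK.
Qed.

Lemma JJ (R : realType) (d : nat) (u : Vec R d) : Jst (Jst u) = - u.
Proof.
rewrite /Jst row_mxKl row_mxKr -[RHS](hsubmxK (- u)).
by rewrite linearN /= [rsubmx (-u)]linearN.
Qed.

Lemma dotJJ (R : realType) (d : nat) (u v : Vec R d) : dot (Jst u) (Jst v) = dot u v.
Proof. by rewrite dotJl JJ dotNr opprK. Qed.

Lemma JZ (R : realType) (d : nat) (k : R) (u : Vec R d) : Jst (k *: u) = k *: Jst u.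
Proof. by rewrite /Jst !linearZ /= scale_row_mx scalerN. Qed.

Lemma JN (R : realType) (d : nat) (u : Vec R d) : Jst (- u) = - Jst u.
Proof. by rewrite -scaleN1r JZ scaleN1r. Qed.

Lemma enormZ (R : realType) (d : nat) (k : R) (u : Vec R d) : enorm (k *: u) = `|k| * enorm u.
Proof. by rewrite /enorm dotZl dotZr mulrA -expr2 sqrtrM ?sqr_ge0 // sqrtr_sqr. Qed.

Lemma enormJ (R : realType) (d : nat) (u : Vec R d) : enorm (Jst u) = enorm u.
Proof. by rewrite /enorm dotJJ. Qed.

Lemma enorm_gt0 (R : realType) (d : nat) (u : Vec R d) : u != 0 -> 0 < enorm u.
Proof. by move=> u0; rewrite /enorm sqrtr_gt0 dot_gt0. Qed.

Lemma line_eq (R : realType) (d : nat) (f : Vec R d -> R) (y v : Vec R d) (t : R) :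
  (fun h : R => h^-1 *: (((fun s : R => f (y + s *: v)) \o shift t) (h *: 1) - f (y + t *: v)))
  = (fun h : R => h^-1 *: ((f \o shift (y + t *: v)) (h *: v) - f (y + t *: v))).
Proof.
apply: funext => h /=.
have -> : h%:A = h by rewrite /GRing.scale /= mulr1.
by rewrite scalerDl addrCA.
Qed.

Lemma line_derivable (R : realType) (d : nat) (f : Vec R d -> R) (y v : Vec R d) (t : R) :
  derivable f (y + t *: v) v -> derivable (fun s : R => f (y + s *: v)) t 1.
Proof. by rewrite /derivable line_eq. Qed.

Lemma line_derive (R : realType) (d : nat) (f : Vec R d -> R) (y v : Vec R d) (t : R) :
  derive (fun s : R => f (y + s *: v)) t 1 = derive f (y + t *: v) v.
Proof. by rewrite /derive line_eq. Qed.

Lemma line_MVT (R : realType) (d : nat) (f : Vec R d -> R) (y v : Vec R d) (s : R) :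
  (forall x, derivable f x v) ->
  exists c : R, `|c| <= `|s| /\ f (y + s *: v) - f y = derive f (y + c *: v) v * s.
Proof.
move=> df; set phi := (fun s : R => f (y + s *: v)).
have dphi : forall t, derivable phi t 1 by move=> t; apply: line_derivable.
have isd : forall t : R, is_derive t (1 : R) phi (derive f (y + t *: v) v).
  by move=> t; apply: DeriveDef => //; rewrite line_derive.
have f0 : f y = phi 0 by rewrite /phi scale0r addr0.
have [s0|s0|->] := ltgtP s 0; last by exists 0; rewrite normr0 lexx scale0r addr0 subrr mulr0.
- have cont : {within `[s, 0], continuous phi}.
    by apply: derivable_within_continuous => t _; apply: dphi.
  have [c cI eq] := MVT s0 (fun t _ => isd t) cont.
  exists c; split.
    move: cI; rewrite in_itv /= => /andP[h1 h2].
    by rewrite !ltr0_norm // lerN2 ltW.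
  by rewrite f0 -/(phi s) -opprB eq sub0r mulrN opprK.
- have cont : {within `[0, s], continuous phi}.
    by apply: derivable_within_continuous => t _; apply: dphi.
  have [c cI eq] := MVT s0 (fun t _ => isd t) cont.
  exists c; split.
    move: cI; rewrite in_itv /= => /andP[h1 h2].
    by rewrite !gtr0_norm // ltW.
  by rewrite f0 -/(phi s) eq subr0.
Qed.

Lemma UD (R : realType) (d : nat) (f : Vec R d -> R) (w p : Vec R d) :
  (forall x, derivable f x w) -> {for p, continuous (fun x => derive f x w)} ->
  forall e, 0 < e -> exists2 del, 0 < del & forall y s, `|y - p| < del -> `|s| * `|w| < del ->
   `|f (y + s *: w) - f y - s * derive f p w| <= e * `|s|.
Proof.
move=> df cf e e0.
have := cf; move/cvgrPdist_lt => /(_ e e0) /nbhs_ballP [del del0 Hb].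
exists (del / 2); first by rewrite divr_gt0.
move=> y s hy hs.
have [c [cs ->]] := line_MVT y s df.
rewrite [s * _]mulrC -mulrBl normrM ler_wpM2r //.
rewrite distrC ltW //; apply: (Hb (y + c *: w)).
rewrite -ball_normE /ball_ /=.
rewrite opprD addrA (le_lt_trans (ler_normD _ _)) //.
rewrite (splitr del) ltrD //; first by rewrite distrC.
rewrite normrN normrZ (le_lt_trans _ hs) // ler_wpM2r //.
Qed.

Lemma Dlin (R : realType) (d : nat) (f : Vec R d -> R) (w p : Vec R d) :
  (forall x, derivable f x w) -> continuous (fun x => derive f x w) ->
  forall e, 0 < e -> exists2 del, 0 < del & forall s, 0 < s < del ->
   `|f (p + s *: w) - f p - s * derive f p w| <= e * s.
Proof.
move=> df cf e e0; have [del del0 H] := UD df (cf p) e0.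
exists (del / (`|w| + 1)); first by rewrite divr_gt0 // ltr_wpDl.
move=> s /andP[s0 sdel]; have := H p s; rewrite (gtr0_norm s0); apply; first by rewrite subrr normr0.
rewrite (le_lt_trans (y := s * (`|w| + 1))) //.
  by rewrite ler_wpM2l ?ltW // ltrDl.
by rewrite -ltr_pdivlMr // ltr_wpDl.
Qed.

Lemma Dneg (R : realType) (d : nat) (f : Vec R d -> R) (w p : Vec R d) :
  (forall x, derivable f x w) -> continuous (fun x => derive f x w) ->
  derive f p w < 0 -> exists2 del, 0 < del & forall s, 0 < s < del -> f (p + s *: w) < f p.
Proof.
move=> df cf L0; set L := derive f p w in L0 *.
have e0 : 0 < - L / 2 by rewrite divr_gt0 // oppr_gt0.
have [del del0 H] := Dlin p df cf e0; exists del => // s /[dup] /andP[s0 _] /H.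
rewrite ler_norml => /andP[_ h].
have : s * L < 0 by rewrite pmulr_rlt0.
have E : - L / 2 * s = - (s * L) / 2 by rewrite mulrC mulrA mulrN mulNr.
rewrite E in h; move: h; set a := s * L; lra.
Qed.

Lemma Dpos (R : realType) (d : nat) (f : Vec R d -> R) (w p : Vec R d) :
  (forall x, derivable f x w) -> continuous (fun x => derive f x w) ->
  0 < derive f p w -> exists2 del, 0 < del & forall s, 0 < s < del -> f p < f (p + s *: w).
Proof.
move=> df cf L0; set L := derive f p w in L0 *.
have e0 : 0 < L / 2 by rewrite divr_gt0.
have [del del0 H] := Dlin p df cf e0; exists del => // s /[dup] /andP[s0 _] /H.
rewrite ler_norml => /andP[h _].
have : 0 < s * L by rewrite mulr_gt0.
have E : L / 2 * s = (s * L) / 2 by rewrite mulrC mulrA.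
rewrite E in h; move: h; set a := s * L; lra.
Qed.

Lemma Dle (R : realType) (d : nat) (f : Vec R d -> R) (w p : Vec R d) (s0 : R) :
  (forall x, derivable f x w) -> continuous (fun x => derive f x w) -> 0 < s0 ->
  (forall s, 0 < s < s0 -> f (p + s *: w) <= f p) -> derive f p w <= 0.
Proof.
move=> df cf s00 H; rewrite leNgt; apply/negP => /(Dpos df cf) [del del0 H2].
have m0 : 0 < Num.min s0 del by rewrite lt_min s00 del0.
have hs : 0 < Num.min s0 del / 2 < s0.
  by rewrite divr_gt0 //= (lt_le_trans (y := Num.min s0 del)) ?ge_min ?lexx // ltr_pdivrMr // ltr_pMr // ltr1n.
have hs' : 0 < Num.min s0 del / 2 < del.
  by rewrite divr_gt0 //= (lt_le_trans (y := Num.min s0 del)) ?ge_min ?lexx ?orbT // ltr_pdivrMr // ltr_pMr // ltr1n.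
have := H _ hs; have := H2 _ hs'; lra.
Qed.

Lemma Dzero (R : realType) (d : nat) (f : Vec R d -> R) (w p : Vec R d) (s0 : R) :
  (forall x, derivable f x w) -> continuous (fun x => derive f x w) -> 0 < s0 ->
  (forall s, 0 < s < s0 -> f (p + s *: w) = f p) -> derive f p w = 0.
Proof.
move=> df cf s00 H; apply/eqP; rewrite eq_le (Dle df cf s00) /=; last by move=> s /H ->.
rewrite leNgt; apply/negP => /(Dneg df cf) [del del0 H2].
have m0 : 0 < Num.min s0 del by rewrite lt_min s00 del0.
have hs : 0 < Num.min s0 del / 2 < s0.
  by rewrite divr_gt0 //= (lt_le_trans (y := Num.min s0 del)) ?ge_min ?lexx // ltr_pdivrMr // ltr_pMr // ltr1n.
have hs' : 0 < Num.min s0 del / 2 < del.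
  by rewrite divr_gt0 //= (lt_le_trans (y := Num.min s0 del)) ?ge_min ?lexx ?orbT // ltr_pdivrMr // ltr_pMr // ltr1n.
have := H _ hs; have := H2 _ hs'; lra.
Qed.

Lemma Dnear (R : realType) (d : nat) (f : Vec R d -> R) (w p : Vec R d) :
  (forall x, derivable f x w) -> continuous (fun x => derive f x w) ->
  forall e, 0 < e -> exists2 del, 0 < del & forall s, 0 <= s < del -> `|f (p + s *: w) - f p| < e.
Proof.
move=> df cf e e0; have [del del0 H] := Dlin p df cf ltr01.
set L := derive f p w in H.
exists (Num.min del (e / (`|L| + 1))); first by rewrite lt_min del0 divr_gt0 // ltr_wpDl.
move=> s /andP[s0 sd]; have [->|sn0] := eqVneq s 0; first by rewrite scale0r addr0 subrr normr0.
have sp : 0 < s by rewrite lt_def sn0 s0.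
move: sd; rewrite lt_min => /andP[sd1 sd2].
have := H s; rewrite sp sd1 => /(_ isT) h.
rewrite ltr_pdivlMr ?ltr_wpDl // in sd2.
have hL : `|s * L| = s * `|L| by rewrite normrM gtr0_norm.
move: h; rewrite mul1r => h.
have := ler_normD (f (p + s *: w) - f p - s * L) (s * L).
rewrite subrK hL; move: sd2; rewrite mulrDr mulr1; set a := s * `|L|; lra.
Qed.

Lemma derive_approx (R : realType) (d : nat) (f : Vec R d -> R) (p v : Vec R d) (l : R) :
  (forall e, 0 < e -> exists2 del, 0 < del & forall h, 0 < `|h| < del ->
     `|f (p + h *: v) - f p - h * l| <= e * `|h|) -> derive f p v = l.
Proof.
move=> H; rewrite /derive; apply: cvg_lim => //.
apply/cvgrPdist_le => e e0; have [del del0 Hd] := H e e0.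
near=> h.
have hn0 : h != 0 by near: h; exact: nbhs_dnbhs_neq.
have hlt : `|h| < del by near: h; exact: dnbhs0_lt.
have hp : 0 < `|h| by rewrite normr_gt0.
have := Hd h; rewrite hp hlt => /(_ isT) Hh.
rewrite /= [h *: v + p]addrC.
have -> : l - h^-1 *: (f (p + h *: v) - f p) = - h^-1 * (f (p + h *: v) - f p - h * l).
  by rewrite /GRing.scale /=; field.
by rewrite normrM normrN normfV mulrC ler_pdivrMr.
Unshelve. all: by end_near.
Qed.

Lemma small_mul (R : realType) (h X del : R) : 0 <= X -> `|h| < del / (X + 1) -> `|h| * X < del.
Proof.
move=> X0 hd; have X1 : 0 < X + 1 by rewrite ltr_wpDl.
rewrite ltr_pdivlMr // in hd.
apply: le_lt_trans hd; rewrite ler_wpM2l //; lra.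
Qed.

Lemma deriveDdir (R : realType) (d : nat) (f : Vec R d -> R) (p a b : Vec R d) :
  (forall w x, derivable f x w) -> (forall w, continuous (fun x => derive f x w)) ->
  derive f p (a + b) = derive f p a + derive f p b.
Proof.
move=> df cf; apply: derive_approx => e e0.
have e2 : 0 < e / 2 by rewrite divr_gt0.
have [da da0 Ha] := UD (df a) (cf a p) e2.
have [db db0 Hb] := UD (df b) (cf b p) e2.
have a0 : 0 <= `|a| by [].
have ab0 : 0 <= `|a| + `|b| by rewrite addr_ge0.
exists (Num.min (da / (`|a| + 1)) (db / ((`|a| + `|b|) + 1))).
  by rewrite lt_min !divr_gt0 // ?ltr_wpDl.
move=> h /andP[hp]; rewrite lt_min => /andP[h1 h2].
have ha := small_mul a0 h1; have hab := small_mul ab0 h2.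
have H1 := Ha p h; rewrite subrr normr0 da0 ha in H1; have {}H1 := H1 isT isT.
have H2 := Hb (p + h *: a) h.
have yp : `|p + h *: a - p| = `|h| * `|a| by rewrite [p + _]addrC addrK normrZ.
rewrite yp in H2.
have hb : `|h| * `|b| < db.
  by apply: le_lt_trans hab; rewrite ler_wpM2l // lerDr.
have ha' : `|h| * `|a| < db.
  by apply: le_lt_trans hab; rewrite ler_wpM2l // lerDl.
have {}H2 := H2 ha' hb.
have E : f (p + h *: (a + b)) - f p - h * (derive f p a + derive f p b) =
   (f (p + h *: a + h *: b) - f (p + h *: a) - h * derive f p b) +
   (f (p + h *: a) - f p - h * derive f p a).
  by rewrite scalerDr addrA; ring.
rewrite E (le_trans (ler_normD _ _)) //.
have -> : e * `|h| = e / 2 * `|h| + e / 2 * `|h| by rewrite -mulrDl -splitr.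
by rewrite lerD.
Qed.

Lemma deriveZdir (R : realType) (d : nat) (f : Vec R d -> R) (p v : Vec R d) (c : R) :
  (forall w x, derivable f x w) -> (forall w, continuous (fun x => derive f x w)) ->
  derive f p (c *: v) = c * derive f p v.
Proof.
move=> df cf; apply: derive_approx => e e0.
have c1 : 0 < `|c| + 1 by rewrite ltr_wpDl.
have e2 : 0 < e / (`|c| + 1) by rewrite divr_gt0.
have [dv dv0 Hv] := UD (df v) (cf v p) e2.
have cv0 : 0 <= `|c| * `|v| by rewrite mulr_ge0.
exists (dv / (`|c| * `|v| + 1)); first by rewrite divr_gt0 // ltr_wpDl.
move=> h /andP[hp] hl.
have := Hv p (h * c); rewrite subrr normr0 dv0 normrM -[`|h| * `|c| * `|v|]mulrA (small_mul cv0 hl) => /(_ isT isT).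
rewrite scalerA [h * (c * _)]mulrA => H; apply: le_trans H _.
have t1 : `|c| / (`|c| + 1) <= 1 by rewrite ler_pdivrMr // mul1r lerDl.
have -> : e / (`|c| + 1) * (`|h| * `|c|) = (e * `|h|) * (`|c| / (`|c| + 1)) by ring.
by rewrite ler_piMr // mulr_ge0 // ltW.
Qed.

Definition grad (R : realType) (d : nat) (f : Vec R d -> R) (p : Vec R d) : Vec R d :=
  \row_i derive f p (delta_mx 0 i).

Lemma derive_grad (R : realType) (d : nat) (f : Vec R d -> R) (p v : Vec R d) :
  (forall w x, derivable f x w) -> (forall w, continuous (fun x => derive f x w)) ->
  derive f p v = dot (grad f p) v.
Proof.
move=> df cf; rewrite {1}(row_sum_delta v).
rewrite (big_morph (fun w => derive f p w) (fun a b => deriveDdir p a b df cf) (derive0 f p)).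
rewrite /dot; apply: eq_bigr => i _; by rewrite deriveZdir // mxE mulrC.
Qed.

Lemma dot_cont (R : realType) (d : nat) (n : Vec R d) : continuous (fun y : Vec R d => dot n y).
Proof.
move=> y0; rewrite /dot.
suff H : forall (r : seq 'I_(d + d)),
  (fun y : Vec R d => \sum_(i <- r) n 0 i * y 0 i) @ y0 --> \sum_(i <- r) n 0 i * y0 0 i.
  exact: H.
elim.
  have -> : (fun y : Vec R d => \sum_(i <- [::]) n 0 i * y 0 i) = fun=> 0.
    by apply: funext => y; rewrite big_nil.
  by rewrite big_nil; apply: cvg_cst; exact: nbhs_filter.
move=> i r IH.
have -> : (fun y : Vec R d => \sum_(j <- i :: r) n 0 j * y 0 j) =
  (fun y : Vec R d => n 0 i * y 0 i) + (fun y : Vec R d => \sum_(j <- r) n 0 j * y 0 j).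
  by apply: funext => y; rewrite big_cons.
rewrite big_cons.
apply: (@cvgD _ _ _ _ _ (fun y : Vec R d => n 0 i * y 0 i)); first exact: nbhs_filter; last exact: IH.
apply: cvgMl_tmp; first exact: nbhs_filter.
exact: coord_continuous.
Qed.

Lemma coord_le_enorm (R : realType) (d : nat) (y : Vec R d) (i : 'I_(d + d)) :
  `|y 0 i| <= enorm y.
Proof.
rewrite /enorm -(sqrtr_sqr (y 0 i)) ler_sqrt; last exact: dot_ge0.
rewrite /dot (bigD1 i) //= expr2 lerDl sumr_ge0 //.
by move=> j _; rewrite -expr2 sqr_ge0.
Qed.

Lemma norm_le_enorm (R : realType) (d : nat) (y : Vec R d) : `|y| <= enorm y.
Proof.
have -> : `|y| = mx_norm y by [].
rewrite mx_normrE; apply: bigmax_le.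
  by rewrite /enorm sqrtr_ge0.
by move=> [i j] _ /=; rewrite (ord1 i); exact: coord_le_enorm.
Qed.

Lemma exists_max (R : realType) (d : nat) (g : Vec R d -> R) (n : Vec R d) :
  continuous g -> (exists B : R, forall x, g x <= 0 -> enorm x <= B) -> g 0 < 0 ->
  exists q, g q <= 0 /\ forall y, g y <= 0 -> dot n y <= dot n q.
Proof.
move=> cg [B HB] g0.
pose A := [set y : Vec R d | g y <= 0].
have A0 : A !=set0 by exists 0; rewrite /A /= ltW.
have cA : compact A.
  have bA : [bounded x | x in A].
    rewrite /bounded_near; near=> M => y Ay /=.
    apply: (le_trans (norm_le_enorm y)); apply: (le_trans (HB y Ay)).
    near: M; apply: nbhs_pinfty_ge; exact: num_real.
  apply: bounded_closed_compact; first exact: bA.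
  have -> : A = g @^-1` [set r | r <= 0] by [].
  by apply: preimage_closed; [move=> x _; exact: cg | exact: closed_le].
have [q qA Hq] := EVT_max_rV A0 cA (continuous_subspaceT (@dot_cont R d n)).
exists q; split; first by move: qA; rewrite inE.
by move=> y gy; apply: Hq; rewrite inE.
Unshelve. all: by end_near.
Qed.

Lemma two_small (R : realType) (a b : R) : 0 < a -> 0 < b ->
  exists s : R, [/\ 0 < s, s < a & s < b].
Proof.
move=> a0 b0; exists (Num.min a b / 2).
have m0 : 0 < Num.min a b by rewrite lt_min a0 b0.
have h : Num.min a b / 2 < Num.min a b by rewrite ltr_pdivrMr // ltr_pMr // ltr1n.
split; first by rewrite divr_gt0.
  by apply: (lt_le_trans h); rewrite ge_min lexx.
by apply: (lt_le_trans h); rewrite ge_min lexx orbT.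
Qed.

Lemma small_le (R : realType) (a b del : R) : 0 < del ->
  (forall s, 0 < s < del -> a <= s * b) -> a <= 0.
Proof.
move=> del0 H; rewrite leNgt; apply/negP => a0.
have b1 : 0 < `|b| + 1 by rewrite ltr_wpDl.
have [s [s0 s1 s2]] := two_small del0 (divr_gt0 a0 b1).
have := H s; rewrite s0 s1 => /(_ isT) h.
rewrite ltr_pdivlMr // in s2.
have : s * b <= s * `|b| by apply: ler_wpM2l; [exact: ltW | exact: ler_norm].
move: s2; rewrite mulrDr mulr1; nra.
Qed.

Lemma Gcont (R : realType) (d : nat) (g : Vec R d -> R) (p w : Vec R d) (c : R) :
  (forall x, derivable g x w) -> continuous (fun x => derive g x w) -> g p < c ->
  exists2 del, 0 < del & forall s, 0 <= s < del -> g (p + s *: w) < c.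
Proof.
move=> dg cg gc; have e0 : 0 < c - g p by rewrite subr_gt0.
have [del del0 H] := Dnear p dg cg e0.
exists del => // s /H; rewrite ltr_norml => /andP[_]; lra.
Qed.

Lemma Gle (R : realType) (d : nat) (g : Vec R d -> R) (p w : Vec R d) (s0 : R) :
  (forall x, derivable g x w) -> continuous (fun x => derive g x w) -> 0 < s0 ->
  (forall s, 0 < s < s0 -> g (p + s *: w) < 0) -> g p <= 0.
Proof.
move=> dg cg s00 H; rewrite leNgt; apply/negP => gp.
have [del del0 Hd] := Dnear p dg cg gp.
have [s [sp s1 s2]] := two_small s00 del0.
have := H s; rewrite sp s1 => /(_ isT).
have := Hd s; rewrite (ltW sp) s2 => /(_ isT); rewrite ltr_norml => /andP[h _]; lra.
Qed.

Lemma support (R : realType) (d : nat) (g : Vec R d -> R) (q y : Vec R d) :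
  (forall w x, derivable g x w) -> (forall w, continuous (fun x => derive g x w)) ->
  (forall x y (t : R), g x < 0 -> g y < 0 -> 0 <= t <= 1 -> g ((1 - t) *: x + t *: y) < 0) ->
  g q = 0 -> grad g q != 0 -> g y < 0 -> dot (grad g q) (y - q) <= 0.
Proof.
move=> dg cg conv gq G0 gy; set G := grad g q.
have LG : derive g q (- G) < 0.
  by rewrite (derive_grad _ _ dg cg) dotNr oppr_lt0 dot_gt0.
have [del del0 Hd] := Dneg (dg (- G)) (cg (- G)) LG.
have key : forall t, 0 < t < 1 -> g (q + t *: (y - q)) <= g q.
  move=> t /andP[t0 t1]; rewrite gq.
  apply: (@Gle _ _ _ _ ((1 - t) *: - G) del (dg _) (cg _) del0) => s hs.
  have E : q + t *: (y - q) + s *: ((1 - t) *: - G) = (1 - t) *: (q + s *: - G) + t *: y.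
    by apply/rowP => i; rewrite !mxE; ring.
  rewrite E; apply: conv => //; first by rewrite -gq; exact: Hd.
  by rewrite !ltW.
rewrite -(derive_grad _ _ dg cg).
apply: (@Dle _ _ _ _ _ 1 (dg _) (cg _) ltr01) => s hs; exact: key.
Qed.

Lemma normal_pos (R : realType) (d : nat) (g : Vec R d -> R) (q : Vec R d) :
  (forall w x, derivable g x w) -> (forall w, continuous (fun x => derive g x w)) ->
  (forall x y (t : R), g x < 0 -> g y < 0 -> 0 <= t <= 1 -> g ((1 - t) *: x + t *: y) < 0) ->
  g 0 < 0 -> g q = 0 -> grad g q != 0 -> 0 < dot (grad g q) q.
Proof.
move=> dg cg conv g0 gq G0; set G := grad g q.
have [del del0 H] := Gcont (dg G) (cg G) g0.
have hs : 0 <= del / 2 < del by rewrite divr_ge0 ?ltW //= ltr_pdivrMr // ltr_pMr // ltr1n.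
have := H _ hs; rewrite add0r => gy.
have := support dg cg conv gq G0 gy; rewrite -/G dotBr dotZr.
have := dot_gt0 G0; have := divr_gt0 del0 (ltr0n R 2); nra.
Qed.

Lemma max_normal (R : realType) (d : nat) (g : Vec R d -> R) (n q : Vec R d) :
  (forall w x, derivable g x w) -> (forall w, continuous (fun x => derive g x w)) ->
  (forall q, g q = 0 -> exists v, derive g q v != 0) ->
  n != 0 -> g q <= 0 -> (forall y, g y <= 0 -> dot n y <= dot n q) ->
  g q = 0 /\ exists2 c, 0 < c & n = c *: grad g q.
Proof.
move=> dg cg reg n0 gq Hq.
have nn : 0 < dot n n := dot_gt0 n0.
have gq0 : g q = 0.
  apply/eqP; rewrite eq_le gq /= leNgt; apply/negP => gqn.
  have [del del0 H] := Gcont (dg n) (cg n) gqn.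
  have hs : 0 <= del / 2 < del by rewrite divr_ge0 ?ltW //= ltr_pdivrMr // ltr_pMr // ltr1n.
  have := Hq _ (ltW (H _ hs)); rewrite dotDr dotZr.
  have := divr_gt0 del0 (ltr0n R 2); nra.
split => //; set G := grad g q.
have G0 : G != 0.
  have [v] := reg q gq0; rewrite (derive_grad _ _ dg cg) -/G.
  by apply: contra => /eqP ->; rewrite dot0l.
have GG : 0 < dot G G := dot_gt0 G0.
have H : forall w, dot G w < 0 -> dot n w <= 0.
  move=> w; rewrite -(derive_grad _ _ dg cg) => Lw.
  have [del del0 Hd] := Dneg (dg w) (cg w) Lw.
  have hs : 0 < del / 2 < del by rewrite divr_gt0 //= ltr_pdivrMr // ltr_pMr // ltr1n.
  have := Hq _ (ltW (eq_ind_r (fun a => _ < a) (Hd _ hs) (esym gq0) : g (q + del / 2 *: w) < 0)).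
  rewrite dotDr dotZr; have := divr_gt0 del0 (ltr0n R 2); nra.
pose c := dot n G / dot G G.
pose u := n - c *: G.
have Gu : dot G u = 0.
  by rewrite /u dotBr dotZr /c dotC mulrAC -mulrA divff ?mulr1 ?subrr // gt_eqF.
have nu : dot n u <= 0.
  apply: (@small_le _ _ (dot n G) 1 ltr01) => s /andP[s0 _].
  have := H (u - s *: G); rewrite dotBr dotZr Gu dotBr dotZr.
  have : - (s * dot G G) < 0 by rewrite oppr_lt0 mulr_gt0.
  by move=> h1 /(_ (eq_ind_r (fun a => a < 0) h1 (sub0r _))); lra.
have uu : dot u u = 0.
  apply/eqP; rewrite eq_le dot_ge0 andbT.
  have -> : dot u u = dot n u by rewrite {1}/u dotBl dotZl dotC Gu mulr0 subr0.
  exact: nu.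
have u0 := dot_eq0 uu.
have nG : n = c *: G by apply/eqP; rewrite -subr_eq0 -/u u0.
exists c => //.
have c0 : 0 <= c.
  have := H (- G); rewrite dotNr oppr_lt0 GG => /(_ isT); rewrite dotNr oppr_le0 => h.
  by rewrite /c divr_ge0 // ltW.
rewrite lt_def c0 andbT; apply: (contraTneq _ n0) => c00.
by rewrite negbK nG c00 scale0r.
Qed.

Lemma reeb_char (R : realType) (d : nat) (g : Vec R d -> R) (q r : Vec R d) :
  (forall w x, derivable g x w) -> (forall w, continuous (fun x => derive g x w)) ->
  grad g q != 0 -> 0 < dot (grad g q) q -> is_reeb g q r ->
  exists2 c, c < 0 & Jst r = c *: grad g q.
Proof.
move=> dg cg G0 Gq [Ht Hq]; set G := grad g q in G0 Gq *.
have GG : 0 < dot G G := dot_gt0 G0.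
pose z := Jst r; pose c := dot z G / dot G G; pose u := z - c *: G.
have Gu : dot G u = 0.
  by rewrite /u dotBr dotZr /c dotC mulrAC -mulrA divff ?mulr1 ?subrr // gt_eqF.
have uz : dot u z = 0.
  have := Ht u; rewrite /tangent (derive_grad _ _ dg cg) -/G Gu => /(_ erefl).
  by rewrite /omega dotJl => /eqP; rewrite oppr_eq0 => /eqP.
have uu : dot u u = 0.
  by rewrite {2}/u dotBr uz dotZr dotC Gu mulr0 subrr.
have zc : z = c *: G by apply/eqP; rewrite -subr_eq0 -/u (dot_eq0 uu).
exists c => //.
move: Hq; rewrite /omega dotJl -/z zc dotZr dotC => h.
have h' : c * dot G q = -1 by rewrite -[LHS]opprK h.
rewrite ltNge; apply/negP => c0.
have : 0 <= c * dot G q by rewrite mulr_ge0 // ltW.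
by rewrite h'; lra.
Qed.

Lemma reeb_exists (R : realType) (d : nat) (g : Vec R d -> R) (q : Vec R d) :
  (forall w x, derivable g x w) -> (forall w, continuous (fun x => derive g x w)) ->
  0 < dot (grad g q) q -> is_reeb g q ((dot (grad g q) q)^-1 *: Jst (grad g q)).
Proof.
move=> dg cg Gq; split.
  move=> v; rewrite /tangent (derive_grad _ _ dg cg) /omega dotZr dotJJ dotC => ->.
  by rewrite mulr0.
by rewrite /omega dotZr dotJJ [dot q _]dotC mulVf // gt_eqF.
Qed.

Lemma outward (R : realType) (d : nat) (g : Vec R d -> R) (q n : Vec R d) (mu : R) :
  (forall w x, derivable g x w) -> (forall w, continuous (fun x => derive g x w)) ->
  grad g q != 0 -> 0 < mu -> n = mu *: grad g q -> enorm n = 1 -> is_outward_normal g q n.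
Proof.
move=> dg cg G0 mu0 nG en; split => //; split.
  by move=> v; rewrite /tangent (derive_grad _ _ dg cg) nG dotZl => ->; rewrite mulr0.
by rewrite (derive_grad _ _ dg cg) nG dotZr mulr_gt0 // dot_gt0.
Qed.

Lemma reeb_normal (R : realType) (d : nat) (g : Vec R d -> R) (q r z : Vec R d) (l : R) :
  (forall w x, derivable g x w) -> (forall w, continuous (fun x => derive g x w)) ->
  grad g q != 0 -> 0 < dot (grad g q) q -> is_reeb g q r -> 0 < l -> r = l *: z ->
  exists2 mu, 0 < mu & - Jst z = mu *: grad g q.
Proof.
move=> dg cg G0 Gq rb l0 rz.
have [c c0 Jr] := reeb_char dg cg G0 Gq rb.
exists (- c / l); first by rewrite divr_gt0 // oppr_gt0.
move: Jr; rewrite rz JZ => Jr.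
have -> : Jst z = l^-1 *: (l *: Jst z) by rewrite scalerA mulVf ?scale1r // gt_eqF.
by rewrite Jr scalerA -scaleNr mulrC mulNr.
Qed.

Lemma half_support (R : realType) (d : nat) (g : Vec R d -> R) (q1 q2 n : Vec R d) (c1 c2 : R) :
  (forall w x, derivable g x w) -> (forall w, continuous (fun x => derive g x w)) ->
  (forall x y (t : R), g x < 0 -> g y < 0 -> 0 <= t <= 1 -> g ((1 - t) *: x + t *: y) < 0) ->
  n != 0 -> g q1 = 0 -> g q2 = 0 -> 0 < c1 -> 0 < c2 ->
  grad g q1 = c1 *: n -> grad g q2 = c2 *: n -> dot n (q2 - q1) <= 0.
Proof.
move=> dg cg conv n0 g1 g2 c10 c20 G1 G2.
have nn := dot_gt0 n0.
have G10 : grad g q1 != 0 by rewrite G1 scaler_eq0 negb_or gt_eqF.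
have L : derive g q2 (- n) < 0.
  by rewrite (derive_grad _ _ dg cg) G2 dotZl dotNr mulrN oppr_lt0 mulr_gt0.
have [del del0 Hd] := Dneg (dg _) (cg _) L.
apply: (@small_le _ _ (dot n n) del del0) => s /[dup] hs /andP[s0 _].
have gy : g (q2 + s *: - n) < 0 by rewrite -g2; exact: Hd.
have := support dg cg conv g1 G10 gy.
rewrite G1 dotZl pmulr_rle0 // => h.
have E : q2 + s *: - n - q1 = (q2 - q1) - s *: n.
  by apply/rowP => i; rewrite !mxE; ring.
move: h; rewrite E [dot n (_ - s *: n)]dotBr dotZr; lra.
Qed.

Lemma seg_zero (R : realType) (d : nat) (g : Vec R d -> R) (q1 q2 n : Vec R d) (c1 c2 : R) :
  (forall w x, derivable g x w) -> (forall w, continuous (fun x => derive g x w)) ->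
  (forall x y (t : R), g x < 0 -> g y < 0 -> 0 <= t <= 1 -> g ((1 - t) *: x + t *: y) < 0) ->
  n != 0 -> g q1 = 0 -> g q2 = 0 -> 0 < c1 -> 0 < c2 ->
  grad g q1 = c1 *: n -> grad g q2 = c2 *: n -> dot n (q2 - q1) = 0 ->
  forall t, 0 <= t <= 1 -> g (q1 + t *: (q2 - q1)) = 0.
Proof.
move=> dg cg conv n0 g1 g2 c10 c20 G1 G2 nv t /andP[t0 t1].
have nn := dot_gt0 n0.
have G10 : grad g q1 != 0 by rewrite G1 scaler_eq0 negb_or gt_eqF.
apply/eqP; rewrite eq_le; apply/andP; split.
  have L1 : derive g q1 (- n) < 0.
    by rewrite (derive_grad _ _ dg cg) G1 dotZl dotNr mulrN oppr_lt0 mulr_gt0.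
  have L2 : derive g q2 (- n) < 0.
    by rewrite (derive_grad _ _ dg cg) G2 dotZl dotNr mulrN oppr_lt0 mulr_gt0.
  have [del1 del10 Hd1] := Dneg (dg _) (cg _) L1.
  have [del2 del20 Hd2] := Dneg (dg _) (cg _) L2.
  have [s0 [s00 s01 s02]] := two_small del10 del20.
  apply: (@Gle _ _ _ _ (- n) s0 (dg _) (cg _) s00) => s /andP[s0' ss0].
  have E : q1 + t *: (q2 - q1) + s *: - n = (1 - t) *: (q1 + s *: - n) + t *: (q2 + s *: - n).
    by apply/rowP => i; rewrite !mxE; ring.
  rewrite E; apply: conv; last by rewrite t0 t1.
    by rewrite -g1; apply: Hd1; rewrite s0' (lt_trans ss0).
  by rewrite -g2; apply: Hd2; rewrite s0' (lt_trans ss0).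
rewrite leNgt; apply/negP => gp.
have [del del0 H] := Gcont (dg n) (cg n) gp.
have hs : 0 <= del / 2 < del by rewrite divr_ge0 ?ltW //= ltr_pdivrMr // ltr_pMr // ltr1n.
have := support dg cg conv g1 G10 (H _ hs).
have E : q1 + t *: (q2 - q1) + del / 2 *: n - q1 = t *: (q2 - q1) + del / 2 *: n.
  by apply/rowP => i; rewrite !mxE; ring.
rewrite E G1 dotZl dotDr !dotZr nv mulr0 add0r.
have := divr_gt0 del0 (ltr0n R 2); have := mulr_gt0 c10 nn; nra.
Qed.

Lemma unique_normal (R : realType) (d : nat) (g : Vec R d -> R) (q1 q2 n : Vec R d) (c1 c2 : R) :
  smooth g -> quadratically_convex_domain g ->
  n != 0 -> g q1 = 0 -> g q2 = 0 -> 0 < c1 -> 0 < c2 ->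
  grad g q1 = c1 *: n -> grad g q2 = c2 *: n -> q1 = q2.
Proof.
move=> sm [conv qc] n0 g1 g2 c10 c20 G1 G2.
have dg : forall w x, derivable g x w := fun w x => (sm [::]).2 x w.
have cg : forall w, continuous (fun x => derive g x w) := fun w => (sm [:: w]).1.
have a1 := half_support dg cg conv n0 g1 g2 c10 c20 G1 G2.
have a2 := half_support dg cg conv n0 g2 g1 c20 c10 G2 G1.
have nv : dot n (q2 - q1) = 0.
  apply/eqP; rewrite eq_le a1 /=; move: a2; rewrite -opprB dotNr; lra.
have sz := seg_zero dg cg conv n0 g1 g2 c10 c20 G1 G2 nv.
apply/eqP; rewrite eq_sym -subr_eq0; apply/negP => v0.
set v := q2 - q1 in v0 nv sz.
have tan : tangent g q1 v by rewrite /tangent (derive_grad _ _ dg cg) G1 dotZl nv mulr0.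
have := qc q1 v g1 (introN idP v0) tan.
have dphi : forall x, derivable (dirder g [:: v]) x v := fun x => (sm [:: v]).2 x v.
have cphi : continuous (fun x => derive (dirder g [:: v]) x v) := (sm [:: v; v]).1.
have phi0 : forall s, 0 <= s < 1 -> dirder g [:: v] (q1 + s *: v) = 0.
  move=> s /andP[s0 s1] /=.
  apply: (@Dzero _ _ _ _ _ (1 - s) (dg v) (cg v)); first by rewrite subr_gt0.
  move=> s' /andP[s'0 s'1].
  rewrite -addrA -scalerDl !sz //.
    by apply/andP; split; lra.
  by apply/andP; split; lra.
have -> : dirder g [:: v; v] q1 = 0.
  rewrite /=; apply: (@Dzero _ _ _ _ _ 1 dphi cphi ltr01) => s /andP[s0 s1].
  rewrite phi0 ?s0 ?s1 ?ltW //.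
by rewrite ltxx.
Qed.

Lemma main_z (R : realType) (d : nat) (g : Vec R d -> R) (z : Vec R d) :
  smooth_closed_hypersurface_defining g ->
  quadratically_convex_domain g ->
  g 0 < 0 -> z != 0 ->
  (exists! q, g q = 0 /\ exists r, is_reeb g q r /\ sim r z) /\
  (forall q, g q = 0 -> (exists r, is_reeb g q r /\ sim r z) ->
     is_outward_normal g q (- ((enorm z)^-1 *: Jst z))).
Proof.
move=> [sm reg bnd] Q g0 z0; have [conv qc] := Q.
have dg : forall w x, derivable g x w := fun w x => (sm [::]).2 x w.
have cg : forall w, continuous (fun x => derive g x w) := fun w => (sm [:: w]).1.
have Gnz : forall q, g q = 0 -> grad g q != 0.
  move=> q gq; have [v] := reg q gq; rewrite (derive_grad _ _ dg cg).
  by apply: contra => /eqP ->; rewrite dot0l.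
have Gpos : forall q, g q = 0 -> 0 < dot (grad g q) q.
  by move=> q gq; exact: normal_pos dg cg conv g0 gq (Gnz q gq).
set n := - Jst z.
have ez : 0 < enorm z := enorm_gt0 z0.
have n0 : n != 0.
  apply: contra z0 => /eqP nz; apply/eqP.
  have : Jst (Jst z) = - z by rewrite JJ.
  have -> : Jst z = 0 by rewrite -[Jst z]opprK -/n nz oppr0.
  have J0 : Jst (0 : Vec R d) = 0 by have := JZ 0 z; rewrite !scale0r.
  by rewrite J0 => /eqP; rewrite eq_sym oppr_eq0 => /eqP.
have normal_of : forall q, g q = 0 -> (exists r, is_reeb g q r /\ sim r z) ->
    exists2 mu, 0 < mu & n = mu *: grad g q.
  move=> q gq [r [rb [l l0 rz]]].
  exact: reeb_normal dg cg (Gnz q gq) (Gpos q gq) rb l0 rz.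
split; last first.
  move=> q gq H; have [mu mu0 nG] := normal_of q gq H.
  apply: (@outward _ _ _ _ _ ((enorm z)^-1 * mu) dg cg (Gnz q gq)).
  - by rewrite mulr_gt0 // invr_gt0.
  - by rewrite -scalerA -nG /n scalerN.
  - rewrite -scaleNr enormZ enormJ normrN normfV gtr0_norm // mulVf //.
    by rewrite gt_eqF.
have [q [gq Hq]] := exists_max n (sm [::]).1 bnd g0.
have [gq0 [c c0 nG]] := max_normal dg cg reg n0 gq Hq.
have Gn : grad g q = c^-1 *: n by rewrite nG scalerA mulVf ?scale1r // gt_eqF.
exists q; split.
  split => //; exists ((dot (grad g q) q)^-1 *: Jst (grad g q)); split.
    exact: reeb_exists dg cg (Gpos q gq0).
  exists ((dot (grad g q) q)^-1 * c^-1).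
    by rewrite mulr_gt0 // invr_gt0 // Gpos.
  by rewrite Gn JZ /n JN JJ opprK scalerA.
move=> q' [gq' H'].
have [mu mu0 nG'] := normal_of q' gq' H'.
have Gn' : grad g q' = mu^-1 *: n by rewrite nG' scalerA mulVf ?scale1r // gt_eqF.
apply: (unique_normal sm Q n0 gq0 gq' _ _ Gn Gn'); by rewrite invr_gt0.
Qed.

Unset Implicit Arguments.
Local Close Scope classical_set_scope.

Theorem lemma2p4 (R : realType) (d : nat) (g : Vec R d -> R) :
  smooth_closed_hypersurface_defining g ->
  quadratically_convex_domain g ->
  g 0 < 0 ->
  forall x : Vec R d, 0 < g x ->
    (* n_-(x) *)
    (exists! q, g q = 0 /\ exists r, is_reeb g q r /\ sim r (- x)) /\
    (* n_+(x) *)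
    (exists! q, g q = 0 /\ exists r, is_reeb g q r /\ sim r x) /\
    (* n_+(x) = G^{-1}(- J x / |x|) *)
    (forall q, g q = 0 -> (exists r, is_reeb g q r /\ sim r x) ->
       is_outward_normal g q (- ((enorm x)^-1 *: Jst x))) /\
    (* n_-(x) = G^{-1}(J x / |x|) *)
    (forall q, g q = 0 -> (exists r, is_reeb g q r /\ sim r (- x)) ->
       is_outward_normal g q ((enorm x)^-1 *: Jst x)).
Proof.
move=> S Q g0 x gx.
have x0 : x != 0 by apply: contraTneq gx => ->; rewrite -leNgt ltW.
have x0' : - x != 0 by rewrite oppr_eq0.
have [A1 B1] := main_z S Q g0 x0'.
have [A2 B2] := main_z S Q g0 x0.
split; first exact: A1.
split; first exact: A2.
split; first exact: B2.
move=> q gq H; have := B1 q gq H.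
have en : enorm (- x) = enorm x by rewrite -scaleN1r enormZ normrN normr1 mul1r.
by rewrite en JN scalerN opprK.
Qed.
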